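(* Fix an integer $r\ge2$, $\varepsilon,s>0$, $\gamma=(\gamma_1,\dots,\gamma_r)$ with $\gamma_i\in(0,1)$, $\sum_i\gamma_i=1$, $i^\star=\arg\max_i\gamma_i$, and let $\Psi=\left(\frac{\gamma_{i^\star}\log d}{d\,r^{r-1}(r-1)\prod_{i=1}^r\gamma_i}\right)^{1/(r-1)}$. Let $d=d(\varepsilon,s,\gamma,r)$ be sufficiently large, and for each $i\in[r]$ fix $S_i\subseteq V_i$ with $|S_i|\le s\gamma_i r n\Psi$. Then for $p=d/n^{r-1}$, with probability $1-\exp(-\Omega(n))$ there is no independent set $S'$ of $\mathcal{H}(r,n,p)$ satisfying $|S'\cap S_i|\ge\varepsilon\gamma_i r n\Psi$ for every $1\le i\le r$.
   Context: $\mathcal{H}(r,n,p)$: random $r$-uniform $r$-partite hypergraph with vertex set $[n]\times[r]$, parts $V_i=[n]\times\{i\}$, each $e\in V_1\times\cdots\times V_r$ an edge independently with probability $p$. An independent set is a vertex set containing no edge. *)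

(* Defs.v *)
From HB Require Import structures.
From mathcomp Require Import all_boot all_order all_algebra.
From mathcomp Require Import all_classical all_reals all_analysis.
Set Implicit Arguments. Unset Strict Implicit. Unset Printing Implicit Defensive.
Import Order.TTheory GRing.Theory Num.Theory.
Local Open Scope ring_scope.

(* Vertex set [n] x [r] is 'I_n * 'I_r; part V_i = [n] x {i}. *)
Definition part (n r : nat) (i : 'I_r) : {set 'I_n * 'I_r} :=
  [set v | v.2 == i].

(* An edge e in V_1 x ... x V_r is encoded by e : 'I_r -> 'I_n,
   meaning the vertices (e i, i); a hypergraph is a set of such edges. *)
Definition edge (n r : nat) := {ffun 'I_r -> 'I_n}.

Definition independent (n r : nat) (G : {set edge n r}) (S' : {set 'I_n * 'I_r}) : bool :=
  [forall e in G, ~~ [forall i, (e i, i) \in S']].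

(* Probability of an event A under H(r,n,p): each of the n^r potential edges
   is present independently with probability p. *)
Definition hprob (R : realType) (n r : nat) (p : R) (A : pred {set edge n r}) : R :=
  \sum_(G : {set edge n r} | A G) p ^+ #|G| * (1 - p) ^+ #|~: G|.

Definition Psi (R : realType) (r : nat) (gam : 'I_r -> R) (istar : 'I_r) (d : R) : R :=
  powR (gam istar * ln d /
        (d * r%:R ^+ r.-1 * (r%:R - 1) * \prod_(i < r) gam i))
       (1 / (r%:R - 1)).

(* Main.v *)
Require Import Defs.
From HB Require Import structures.
From mathcomp Require Import all_boot all_order all_algebra.
From mathcomp Require Import all_classical all_reals all_analysis.
From mathcomp Require Import ring lra.
Import Order.TTheory GRing.Theory Num.Theory.
Local Open Scope ring_scope.

Section S.
Variables (R : realType) (n r : nat).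

Definition box (T : {set 'I_n * 'I_r}) : {set edge n r} :=
  [set e : edge n r | [forall i, (e i, i) \in T]].

Lemma weightE (p : R) (G : {set edge n r}) :
  p ^+ #|G| * (1 - p) ^+ #|~: G| = \prod_e (if e \in G then p else 1 - p).
Proof.
rewrite (bigID (fun e => e \in G)) /=.
rewrite (eq_bigr (fun=> p)) ?prodr_const; last by move=> e ->.
rewrite (eq_bigr (fun=> 1 - p)) ?prodr_const; last by move=> e /negbTE ->.
congr (_ * _ ^+ _); apply: eq_card => e; by rewrite inE.
Qed.

Lemma hprob_avoid (p : R) (E : {set edge n r}) :
  \sum_(G : {set edge n r} | [disjoint G & E]) p ^+ #|G| * (1 - p) ^+ #|~: G|
  = (1 - p) ^+ #|E|.
Proof.
transitivity (\sum_(G : {set edge n r}) \prod_e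
   (if e \in G then (if e \in E then 0 else p) else 1 - p)).
  rewrite [RHS](bigID (fun G : {set edge n r} => [disjoint G & E])) /= [X in _ = _ + X]big1 ?addr0.
    apply: eq_bigr => G dGE; rewrite weightE; apply: eq_bigr => e _.
    case: ifP => // eG; case: ifP => // eE.
    by move: dGE; rewrite finset.disjoints_subset => /fintype.subsetP/(_ e eG); rewrite inE eE.
  move=> G /pred0Pn [e /andP [eG eE]].
  have eG' : e \in G := eG; have eE' : e \in E := eE.
  by rewrite (bigD1 e) //= eG' eE' mul0r.
rewrite -(@bigA_distr R 0 1 *%R +%R _ (fun e => if e \in E then 0 else p) (fun=> 1 - p)).
rewrite (bigID (fun e => e \in E)) /=.
rewrite (eq_bigr (fun=> 1 - p)) ?prodr_const; last by move=> e ->; rewrite add0r.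
rewrite big1 ?mulr1 ?cardsE //.
by move=> e /negbTE ->; rewrite addrC subrK.
Qed.

Lemma card_box (T : {set 'I_n * 'I_r}) :
  #|box T| = (\prod_(i < r) #|[set x : 'I_n | (x, i) \in T]|)%N.
Proof.
rewrite -(@eq_card _ (family (fun i : 'I_r => [pred x : 'I_n | (x, i) \in T]))).
  rewrite card_family foldrE big_map big_enum /=.
  by apply: eq_bigr => i _; apply: eq_card => x; rewrite inE.
move=> e; rewrite [in RHS]inE. apply/familyP/forallP => H i; move: (H i); by rewrite inE.
Qed.

Lemma indepE (G : {set edge n r}) (T : {set 'I_n * 'I_r}) : independent G T = [disjoint G & box T].
Proof.
apply/forall_inP/idP.
  move=> H; rewrite finset.disjoints_subset; apply/fintype.subsetP => e eG.
  by rewrite !inE; apply: H.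
rewrite finset.disjoints_subset => /fintype.subsetP H e eG.
by move: (H e eG); rewrite !inE.
Qed.

Lemma w_ge0 (p : R) (G : {set edge n r}) : 0 <= p <= 1 -> 0 <= p ^+ #|G| * (1 - p) ^+ #|~: G|.
Proof.
move=> /andP [p0 p1]; apply: mulr_ge0; apply: exprn_ge0 => //.
by rewrite subr_ge0.
Qed.

Lemma hprob_union (p : R) (A : pred {set edge n r}) (Q : pred {set 'I_n * 'I_r})
  (U : {set 'I_n * 'I_r}) : 0 <= p <= 1 ->
  (forall G, A G -> exists2 T : {set 'I_n * 'I_r}, (T \subset U) && Q T & independent G T) ->
  hprob p A <= \sum_(T in powerset U | Q T) (1 - p) ^+ #|box T|.
Proof.
move=> hp HA.
pose w (G : {set edge n r}) := p ^+ #|G| * (1 - p) ^+ #|~: G|.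
pose c (T : {set 'I_n * 'I_r}) (G : {set edge n r}) := ((T \in powerset U) && Q T) && [disjoint G & box T].
apply: (@le_trans _ _ (\sum_(G : {set edge n r}) \sum_(T : {set 'I_n * 'I_r}) (if c T G then w G else 0))).
  rewrite /hprob [X in _ <= X](bigID A) /= -[X in X <= _]addr0.
  apply: lerD; last first.
    by apply: sumr_ge0 => G _; apply: sumr_ge0 => T _; case: ifP => // _; exact: (w_ge0 _ _ hp).
  apply: ler_sum => G AG; have [T /andP [TU QT] iT] := HA G AG.
  rewrite (bigD1 T) /=; last by [].
  have -> : c T G by rewrite /c powersetE TU QT -indepE.
  rewrite lerDl; apply: sumr_ge0 => T' _; case: ifP => // _; exact: (w_ge0 _ _ hp).
rewrite exchange_big /= [X in _ <= X]big_mkcond /=; apply: ler_sum => T _.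
rewrite /c; case: ifP => /= HT.
  by rewrite -hprob_avoid [X in _ <= X]big_mkcond /=.
by rewrite big1.
Qed.
End S.

Lemma card_bigcup_le (T : finType) k (F : 'I_k -> {set T}) :
  (#|\bigcup_(i < k) F i| <= \sum_(i < k) #|F i|)%N.
Proof.
elim/big_rec2: _ => [|i x y _ H]; first by rewrite cards0.
by apply: leq_trans (leq_card_setU _ _) _; rewrite leq_add2l.
Qed.

Lemma indep_sub n r (G : {set edge n r}) (T T' : {set 'I_n * 'I_r}) :
  T \subset T' -> independent G T' -> independent G T.
Proof.
move=> /fintype.subsetP sub /forall_inP H; apply/forall_inP => e eG.
apply/negP => /forallP A; move/negP: (H e eG); apply; apply/forallP => i.
exact: sub (A i).
Qed.

Lemma card_slice n r (T S : {set 'I_n * 'I_r}) (i : 'I_r) :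
  S \subset part n i ->
  (#|T :&: S| <= #|[set x : 'I_n | (x, i) \in T]|)%N.
Proof.
move=> /fintype.subsetP SP.
apply: leq_trans (leq_imset_card (fun x : 'I_n => (x, i)) _).
apply: subset_leq_card; apply/fintype.subsetP => v; rewrite inE => /andP [vT vS].
have : v \in part n i by exact: SP.
rewrite inE => /eqP v2; apply/imsetP; exists v.1; last by rewrite -v2; case: v {vT vS v2}.
by rewrite inE -v2; case: v vT {vS v2}.
Qed.

Lemma powR_inv_pow (R : realType) (x : R) m : (0 < m)%N -> 0 <= x ->
  (powR x (1 / m%:R)) ^+ m = x.
Proof.
move=> m0 x0.
rewrite -powR_mulrn ?powR_ge0 // -powRrM mul1r mulVf ?powRr1 //.
by rewrite pnatr_eq0 -lt0n.
Qed.

Theorem mainTheorem19 (R : realType) (r : nat) (eps s : R)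
  (gam : 'I_r -> R) (istar : 'I_r) :
  (2 <= r)%N -> 0 < eps -> 0 < s ->
  (forall i, 0 < gam i < 1) -> \sum_(i < r) gam i = 1 ->
  (forall i, gam i <= gam istar) ->
  exists d0 : R, forall d : R, d0 <= d ->
    exists c : R, 0 < c /\
    exists n0 : nat, forall n : nat, (n0 <= n)%N ->
      forall S : 'I_r -> {set 'I_n * 'I_r},
        (forall i, S i \subset part n i) ->
        (forall i, #|S i|%:R <= s * gam i * r%:R * n%:R * Psi gam istar d) ->
        hprob (d / n%:R ^+ r.-1)
          (fun G : {set edge n r} =>
             [exists S' : {set 'I_n * 'I_r},
               independent G S' &&
               [forall i, eps * gam i * r%:R * n%:R * Psi gam istar d
                            <= #|S' :&: S i|%:R]])
        <= expR (- (c * n%:R)).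
Proof.
case: r gam istar => [|m] gam istar r2 eps0 s0 g01 gsum gmax; first by [].
have m1 : (0 < m)%N by exact: r2.
set g := gam istar.
have g0 : 0 < g by case/andP: (g01 istar).
set P := \prod_(i < m.+1) gam i.
have P0 : 0 < P by apply: prodr_gt0 => i _; case/andP: (g01 i).
have ln20 : 0 < ln (2 : R) by apply: ln_gt0; lra.
have mR0 : 0 < m%:R :> R by rewrite ltr0n.
have q0 : 0 < eps ^+ m.+1 * g by apply: mulr_gt0 => //; apply: exprn_gt0.
set B := s * ln 2 * m%:R / (eps ^+ m.+1 * g).
have B0 : 0 <= B.
  by apply: divr_ge0; [apply: mulr_ge0; [apply: mulr_ge0|]|]; apply: ltW.
exists (expR (B + 1)) => d hd.
have d1 : 1 < d by apply: lt_le_trans hd; rewrite expR_gt1; lra.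
have d0 : 0 < d by lra.
have lnd : B + 1 <= ln d by rewrite -ler_expR lnK // posrE.
have rm : m.+1%:R - 1 = m%:R :> R by rewrite -natr1 addrK.
set X0 := g * ln d / (d * m.+1%:R ^+ m * m%:R * P).
have X00 : 0 < X0.
  apply: divr_gt0; first by apply: mulr_gt0 => //; apply: ln_gt0.
  by apply: mulr_gt0 => //; apply: mulr_gt0 => //; apply: mulr_gt0 => //; apply: exprn_gt0.
set Ψ := Psi gam istar d.
have PsiE : Ψ = powR X0 (1 / m%:R) by rewrite /Ψ /Psi rm.
have Psi0 : 0 < Ψ by rewrite PsiE powR_gt0.
have PsiX : Ψ ^+ m = X0 by rewrite PsiE powR_inv_pow // ltW.
set K := d * (eps * m.+1%:R * Ψ) ^+ m.+1 * P.
set L := s * m.+1%:R * Ψ * ln 2.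
have KE : K = m.+1%:R * Ψ * (eps ^+ m.+1 * g * ln d / m%:R).
  rewrite /K [in LHS]exprS !exprMn PsiX /X0 exprS.
  have b0 : m.+1%:R ^+ m != 0 :> R by rewrite expf_eq0 pnatr_eq0 andbF.
  field.
  by rewrite b0 (gt_eqF mR0) (gt_eqF P0) (gt_eqF d0).
have c0 : 0 < K - L.
  rewrite KE /L.
  have e : s * ln 2 * m%:R = eps ^+ m.+1 * g * B.
    rewrite /B; field; by rewrite (gt_eqF g0) expf_eq0 (gt_eqF eps0) andbF.
  move: q0 e; set q := eps ^+ m.+1 * g => q0 e.
  have h : s * ln 2 < q * ln d / m%:R.
    rewrite ltr_pdivlMr // e; nra.
  have -> : m.+1%:R * Ψ * (q * ln d / m%:R) - s * m.+1%:R * Ψ * ln 2 =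
    m.+1%:R * Ψ * (q * ln d / m%:R - s * ln 2) by ring.
  apply: mulr_gt0; [apply: mulr_gt0 => //; by rewrite ltr0n | by rewrite subr_gt0].
exists (K - L); split=> //.
exists (Num.truncn d).+1 => nn hn S HS HSb /=.
have dn : d < nn%:R by apply: lt_le_trans (truncnS_gt d) _; rewrite ler_nat.
have n0 : 0 < nn%:R :> R by lra.
have nm : nn%:R <= nn%:R ^+ m :> R.
  rewrite -natrX ler_nat -{1}(expn1 nn) leq_pexp2l //.
  by rewrite -(ltr0n R).
have nm0 : 0 < nn%:R ^+ m :> R by lra.
set p := d / nn%:R ^+ m.
have hp : 0 <= p <= 1.
  apply/andP; split; first by apply: divr_ge0; lra.
  by rewrite ler_pdivrMr // mul1r; lra.
set U := \bigcup_(i < m.+1) S i.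
set b := fun i => eps * gam i * m.+1%:R * nn%:R * Ψ.
apply: le_trans (@hprob_union R nn m.+1 p _
   (fun T => [forall i, b i <= #|T :&: S i|%:R]) U hp _) _.
  move=> G /existsP [S' /andP [iS' /forallP bS']].
  exists (S' :&: U); first rewrite subsetIr /=.
    apply/forallP => i.
    have SU : S i \subset U by apply: (@finset.bigcup_sup _ _ i).
    rewrite -finset.setIA (finset.setIidPr SU); exact: (bS' i).
  exact: indep_sub (subsetIl _ _) iS'.
have prodb : \prod_i b i = P * (eps * m.+1%:R * Ψ * nn%:R) ^+ m.+1.
  rewrite (eq_bigr (fun i => gam i * (eps * m.+1%:R * Ψ * nn%:R))); last first.
    by move=> i _; rewrite /b; ring.
  by rewrite big_split /= prodr_const card_ord.
have nK : nn%:R * K = p * \prod_i b i.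
  rewrite prodb /p /K !exprMn !exprS; field.
  by rewrite expf_eq0 (gt_eqF n0) andbF.
apply: le_trans (_ : \sum_(T in powerset U) expR (- (nn%:R * K)) <= _).
  rewrite big_mkcondr /=; apply: ler_sum => T _.
  case: ifP => [/forallP QT|_]; last exact: expR_ge0.
  have h1 : 0 <= 1 - p by case/andP: hp => _ ?; lra.
  apply: le_trans (_ : (expR (- p)) ^+ #|box nn m.+1 T| <= _).
    apply: lerXn2r; rewrite ?nnegrE ?expR_ge0 //.
    by have := expR_ge1Dx (- p).
  rewrite -expRM_natl ler_expR mulrN lerN2 nK mulrC.
  apply: ler_wpM2r; first by case/andP: hp.
  rewrite card_box natr_prod; apply: ler_prod => i _; apply/andP; split.
    rewrite /b; apply: mulr_ge0; last exact: ltW.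
    apply: mulr_ge0; last exact: ltW.
    apply: mulr_ge0; last by rewrite ler0n.
    by apply: mulr_ge0; apply: ltW; [|case/andP: (g01 i)].
  apply: le_trans (QT i) _; rewrite ler_nat; exact: card_slice.
rewrite sumr_const card_powerset -(mulr_natl (expR (- (nn%:R * K))) (2 ^ #|U|)).
have e2 : (2 ^ #|U|)%:R = expR (#|U|%:R * ln 2) :> R.
  by rewrite expRM_natl lnK ?natrX // posrE.
rewrite e2 -expRD ler_expR.
have NU : #|U|%:R <= s * m.+1%:R * nn%:R * Ψ.
  apply: le_trans (_ : \sum_i #|S i|%:R <= _).
    by rewrite -natr_sum ler_nat card_bigcup_le.
  apply: le_trans (ler_sum _ (fun i _ => HSb i)) _.
  rewrite (_ : \sum_i _ = s * m.+1%:R * nn%:R * Ψ * \sum_i gam i).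
    by rewrite gsum mulr1.
  by rewrite mulr_sumr; apply: eq_bigr => i _; ring.
have := ler_wpM2r (ltW ln20) NU.
rewrite /L; nra.
Qed.
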